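(* Let $0<A<1$ and let $\theta\in C(\mathbb{R})$ with $\lim_{|x|\to\infty}\theta(x)=0$. Then there is a piecewise constant function $G>0$ on $\mathbb{R}$ such that $G(x)\ge\max(|\theta(x)|,\theta(x)^2)$ for all $x\in\mathbb{R}$, $G$ is even on $\mathbb{R}$ and nonincreasing on $[0,+\infty)$, $\lim_{x\to+\infty}G(x)=0$, and there is $\sigma>0$ such that for all $i\in\mathbb{N}$, $$(\rho_i*G)(x)\le\frac{\sigma}{1+i}G(x)\quad\text{for all }x\in\mathbb{R}.$$
   Context: $\lambda_i:=-1+(2i+1)A$ for $i\in\mathbb{N}$ (so $\lambda_0=A-1<0$ and $\lambda_i-\lambda_0=2iA$). For $i\ge1$, $\rho_i(z):=\frac{1}{2\sqrt{\lambda_i-\lambda_0}}e^{-\sqrt{\lambda_i-\lambda_0}|z|}$, and $\rho_0(z):=\frac{1}{2\sqrt{-\lambda_0}}e^{-\sqrt{-\lambda_0}|z|}$; $*$ denotes convolution on $\mathbb{R}$. *)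

(* Defs.v *)
From HB Require Import structures.
From mathcomp Require Import all_boot all_order all_algebra.
From mathcomp Require Import all_classical all_reals all_analysis.
Set Implicit Arguments. Unset Strict Implicit. Unset Printing Implicit Defensive.
Import Order.TTheory GRing.Theory Num.Theory.
Import numFieldNormedType.Exports.
Local Open Scope ring_scope.
Local Open Scope classical_set_scope.

Definition lam (R : realType) (A : R) (i : nat) : R := -1 + (2 * i%:R + 1) * A.

Definition rho_c (R : realType) (A : R) (i : nat) : R :=
  if i is 0 then - lam A 0 else lam A i - lam A 0.

Definition rho_kernel (R : realType) (A : R) (i : nat) (z : R) : R :=
  (2 * Num.sqrt (rho_c A i))^-1 * expR (- (Num.sqrt (rho_c A i) * `|z|)).

(* convolution (f * g)(x) = int_R f(x - y) g(y) dy, as a Lebesgue integral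
   in the extended reals (well defined for nonnegative integrands) *)
Definition convolution (R : realType) (f g : R -> R) (x : R) : \bar R :=
  (\int[@lebesgue_measure R]_(y in [set: R]) (f (x - y) * g y)%:E)%E.

Definition piecewise_constant (R : realType) (G : R -> R) : Prop :=
  forall a b : R, a < b ->
    exists (n : nat) (t : nat -> R),
      [/\ t 0%N = a, t n = b,
          (forall k, (k < n)%N -> t k < t k.+1) &
          (forall k, (k < n)%N -> forall x y,
              t k < x < t k.+1 -> t k < y < t k.+1 -> G x = G y)].

(* Main.v *)
From HB Require Import structures.
From mathcomp Require Import all_boot all_order all_algebra.
From mathcomp Require Import all_classical all_reals all_analysis.
From mathcomp Require Import measurable_realfun ring lra zify.
Require Import Defs.
Import Order.TTheory GRing.Theory Num.Theory.
Import numFieldNormedType.Exports.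
Set Implicit Arguments. Unset Strict Implicit. Unset Printing Implicit Defensive.
Local Open Scope ring_scope.
Local Open Scope classical_set_scope.
Lemma le_integral_nm (R : realType) (f g : R -> \bar R) :
  (forall x, (0 <= f x)%E) -> (forall x, (f x <= g x)%E) ->
  (\int[@lebesgue_measure R]_x f x <= \int[@lebesgue_measure R]_x g x)%E.
Proof.
move=> f0 fg; have g0 x : (0 <= g x)%E := le_trans (f0 x) (fg x).
rewrite !ge0_integralTE //=.
apply: ge_ereal_sup => _ [h hf <-]; apply: ereal_sup_ubound.
by exists h => // x; exact: le_trans (hf x) (fg x).
Qed.

Lemma is_derive_aff (R : realType) (a b y : R) :
  is_derive y 1 (fun y : R => - (b * (y - a))) (- b).
Proof.
have -> : (fun y : R => - (b * (y - a))) = ((cst (-b) * id) + cst (b * a) : R -> R).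
  by apply: funext => z /=; rewrite !fctE; ring.
apply: is_derive_eq.
by rewrite !fctE /GRing.scale /= mulr1 mulr0 !addr0.
Qed.

Lemma is_derive_expaff (R : realType) (a b y : R) : b != 0 ->
  is_derive y 1 (fun y => - (b^-1 * expR (- (b * (y - a)))))
     (expR (- (b * (y - a)))).
Proof.
move=> hb.
have h1 := is_derive_aff a b y.
have h2 : is_derive y 1 (expR \o (fun y : R => - (b * (y - a)))) (expR (- (b * (y - a))) * - b).
  exact: is_derive1_comp.
have -> : (fun y => - (b^-1 * expR (- (b * (y - a))))) = - ((b^-1) \*: (expR \o (fun y : R => - (b * (y - a))))).
  by [].
apply: is_derive_eq.
by rewrite /GRing.scale /= !mulrN opprK mulrCA mulVf // mulr1.
Qed.

Lemma int_expaff (R : realType) (a b : R) : 0 < b ->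
  (\int[@lebesgue_measure R]_(y in `[a, +oo[) (expR (- (b * (y - a))))%:E = (b^-1)%:E)%E.
Proof.
move=> b0.
have hb : b != 0 by rewrite gt_eqF.
have cF : continuous (fun y : R => - (b^-1 * expR (- (b * (y - a))))).
  move=> y; apply: differentiable_continuous; apply/derivable1_diffP.
  by case: (is_derive_expaff a y hb).
have cf : continuous (fun y : R => expR (- (b * (y - a)))).
  move=> y; apply: continuous_comp; last exact: continuous_expR.
  apply: differentiable_continuous; apply/derivable1_diffP.
  by case: (is_derive_aff a b y).
rewrite (@ge0_continuous_FTC2y _ (fun y => expR (- (b * (y - a)))) (fun y => - (b^-1 * expR (- (b * (y - a))))) a 0).
- by rewrite subrr mulr0 oppr0 expR0 mulr1 sub0e -EFinN opprK.
- by move=> x _; exact: expR_ge0.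
- exact: continuous_subspaceT.
- have L : (fun x => b * (x - a)) @ +oo --> +oo.
    apply/cvgryPge => M; near=> x.
    rewrite -ler_pdivrMl // lerBrDr.
    near: x; apply: nbhs_pinfty_ge; exact: num_real.
  have HE := cvg_comp _ _ L (@cvgr_expR R).
  have := cvgN (@cvgMl_tmp _ _ _ _ _ b^-1 _ HE).
  by rewrite mulr0 oppr0 => H; exact: H.
- by move=> x _; case: (is_derive_expaff a x hb).
- exact/cvg_at_right_filter/cF.
- by move=> x _; rewrite derive1E; case: (is_derive_expaff a x hb).
Unshelve. all: end_near. Qed.

Lemma cont_expabs (R : realType) (x b : R) :
  continuous (fun y : R => expR (- (b * `|x - y|))).
Proof.
move=> y; apply: continuous_comp; last exact: continuous_expR.
apply: cvgN; apply: cvgMl_tmp.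
apply: (continuous_comp (f := fun y : R => x - y) (g := Num.norm)); last exact: norm_continuous.
by apply: cvgB; [exact: cvg_cst | exact: cvg_id].
Qed.

Lemma int_expabs (R : realType) (x b : R) : 0 < b ->
  (\int[@lebesgue_measure R]_y (expR (- (b * `|x - y|)))%:E = (b^-1 + b^-1)%:E)%E.
Proof.
move=> b0.
have cf := @cont_expabs R x b.
have mf : measurable_fun [set: R] (EFin \o (fun y : R => expR (- (b * `|x - y|)))).
  by apply/measurable_EFinP; exact: continuous_measurable_fun.
have mA : measurable (`[x, +oo[%classic : set R) by [].
rewrite -(setUv `[x, +oo[%classic) ge0_integral_setU //=; last 3 first.
  exact: measurableC.
  by rewrite setUv.
  exact/disj_setPCl.
rewrite EFinD; congr (_ + _)%E.
  rewrite -(int_expaff x b0); apply: eq_integral => y.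
  rewrite inE /= in_itv /= andbT => xy.
  by rewrite distrC ger0_norm // subr_ge0.
rewrite setCitvr integral_itv_bndo_bndc; last exact: measurable_funTS.
have := @ge0_integration_by_substitutionNy R (fun y : R => expR (- (b * `|x - y|))) (- x).
rewrite opprK => ->; last 2 first.
  exact: continuous_subspaceT.
  by move=> y _; exact: expR_ge0.
rewrite -(int_expaff (- x) b0); apply: eq_integral => y.
rewrite inE /= in_itv /= andbT => xy.
rewrite /= !opprK (addrC y) ger0_norm //; lra.
Qed.

Lemma conv_bound (R : realType) (G : R -> R) (s k C x : R) :
  0 < k -> 2 * k <= s -> 0 <= C -> (forall y, 0 <= G y) ->
  (forall y, G y <= C * expR (k * `|x - y|) * G x) ->
  (\int[@lebesgue_measure R]_(y in [set: R])
     ((2 * s)^-1 * expR (- (s * `|x - y|)) * G y)%:E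
   <= (C * G x * (2 / s ^+ 2))%:E)%E.
Proof.
move=> k0 ks C0 G0 HG.
have s0 : 0 < s by lra.
have b0 : 0 < s - k by lra.
set K := C * G x * (2 * s)^-1.
have K0 : 0 <= K.
  by rewrite /K; apply: mulr_ge0; [apply: mulr_ge0 => // | rewrite invr_ge0; lra].
apply: (@le_trans _ _ (\int[@lebesgue_measure R]_y (K%:E * (expR (- ((s - k) * `|x - y|)))%:E))%E).
  apply: le_integral_nm => y.
    rewrite lee_fin; apply: mulr_ge0 => //; apply: mulr_ge0; last exact: expR_ge0.
    rewrite invr_ge0; lra.
  rewrite -EFinM lee_fin.
  have e : expR (- ((s - k) * `|x - y|)) = expR (- (s * `|x - y|)) * expR (k * `|x - y|).
    by rewrite -expRD; congr expR; ring.
  rewrite e /K.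
  have hy := HG y.
  have h1 : 0 <= (2 * s)^-1 * expR (- (s * `|x - y|)).
    by apply: mulr_ge0; [rewrite invr_ge0; lra | exact: expR_ge0].
  apply: le_trans (ler_wpM2l h1 hy) _.
  by rewrite le_eqVlt; apply/orP; left; apply/eqP; ring.
rewrite ge0_integralZl_EFin //; last first.
  by apply/measurable_EFinP; exact: continuous_measurable_fun (@cont_expabs R x (s - k)).
rewrite int_expabs // -EFinM lee_fin.
have hu : (s - k)^-1 <= 2 / s.
  rewrite -[2 / s]invf_div lef_pV2 ?posrE //; [lra | apply: divr_gt0 => //; lra].
apply: le_trans (ler_wpM2l K0 (lerD hu hu)) _.
rewrite /K le_eqVlt; apply/orP; left; apply/eqP.
field; lra.
Qed.


Section gseq.
Variables (R : realType) (a : nat -> R) (k : R).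
Hypothesis k0 : 0 < k.
Hypothesis a0 : forall n, 0 < a n.
Hypothesis ad : forall n, a n.+1 <= a n.

Fixpoint gs (n : nat) : R :=
  match n with 0%N => a 0 | n'.+1 => Num.max (a n) (expR (- k) * gs n') end.

Lemma gs_ge_a n : a n <= gs n.
Proof. by case: n => [|n] //=; rewrite le_max lexx. Qed.

Lemma gs_gt0 n : 0 < gs n.
Proof. exact: lt_le_trans (a0 n) (gs_ge_a n). Qed.

Lemma gs_step n : expR (- k) * gs n <= gs n.+1.
Proof. by rewrite /= le_max lexx orbT. Qed.

Lemma gs_dec n : gs n.+1 <= gs n.
Proof.
rewrite /= ge_max; apply/andP; split.
  exact: le_trans (ad n) (gs_ge_a n).
rewrite ger_pMl ?gs_gt0 //.
by rewrite -expR0 ler_expR oppr_le0 ltW.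
Qed.

Lemma gs_mono m n : (m <= n)%N -> gs n <= gs m.
Proof.
elim: n => [|n IH]; first by rewrite leqn0 => /eqP ->.
rewrite leq_eqVlt => /orP [/eqP -> //| ].
rewrite ltnS => /IH; exact: le_trans (gs_dec n).
Qed.

Lemma gs_growth m j : expR (- (k * j%:R)) * gs m <= gs (m + j).
Proof.
elim: j => [|j IH]; first by rewrite mulr0 oppr0 expR0 mul1r addn0.
rewrite addnS; apply: le_trans (gs_step _).
have -> : - (k * j.+1%:R) = - k + - (k * j%:R) by rewrite -natr1; ring.
by rewrite expRD -mulrA ler_wpM2l // expR_ge0.
Qed.

Hypothesis alim : forall e, 0 < e -> exists N, forall n, (N <= n)%N -> a n <= e.

Lemma gs_lim e : 0 < e -> exists N, forall n, (N <= n)%N -> gs n <= e.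
Proof.
move=> e0; have [N HN] := alim e0.
have key : forall L, gs (N + L) <= Num.max e (expR (- (k * L%:R)) * gs N).
  elim=> [|L IH]; first by rewrite addn0 mulr0 oppr0 expR0 mul1r le_max lexx orbT.
  rewrite addnS /= ge_max; apply/andP; split.
    by rewrite le_max HN ?orTb // -addnS leq_addr.
  have h := ler_wpM2l (ltW (expR_gt0 (- k))) IH.
  apply: le_trans h _.
  rewrite maxr_pMr ?expR_gt0 // ge_max; apply/andP; split.
    rewrite le_max; apply/orP; left.
    by rewrite ger_pMl // -expR0 ler_expR oppr_le0 ltW.
  rewrite le_max; apply/orP; right.
  have -> : - (k * L.+1%:R) = - k + - (k * L%:R) by rewrite -natr1; ring.
  by rewrite expRD mulrA.
have gN0 := gs_gt0 N.
pose L := Num.truncn (gs N / (k * e)).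
exists (N + L.+1)%N => n hn.
have -> : n = (N + (n - N))%N by rewrite subnKC // (leq_trans (leq_addr _ _) hn).
apply: le_trans (key _) _; rewrite ge_max lexx /=.
have hL : gs N / (k * e) < (n - N)%:R.
  apply: lt_le_trans (truncnS_gt _) _.
  by rewrite ler_nat leq_subRL ?(leq_trans (leq_addr _ _) hn) // (leq_trans _ hn)// addnS.
set t := (n - N)%:R in hL *.
have t0 : 0 <= t by [].
have kt0 : 0 <= k * t by apply: mulr_ge0 => //; exact: ltW.
have p0 : 0 < 1 + k * t by lra.
have h1 : expR (- (k * t)) <= (1 + k * t)^-1.
  rewrite expRN lef_pV2 ?posrE ?expR_gt0 //; exact: expR_ge1Dx.
have hg : gs N <= (1 + k * t) * e.
  move: hL; rewrite ltr_pdivrMr ?mulr_gt0 // => hL.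
  have : 0 <= e * k * t by apply: mulr_ge0 => //; apply: mulr_ge0; exact: ltW.
  nra.
apply: le_trans (ler_wpM2r (ltW gN0) h1) _.
rewrite mulrC -ler_pdivlMr ?invr_gt0 // invrK mulrC //.
Qed.
End gseq.


Lemma natzR (R : realType) (n : nat) : ((n%:Z)%:~R : R) = n%:R.
Proof. exact: (esym (pmulrn 1 n)). Qed.

Lemma kc_pos (R : realType) (u v : R) : 0 <= u ->
  (forall z : int, ~ (u < z%:~R < v)) ->
  forall x y, u < x < v -> u < y < v -> Num.truncn x = Num.truncn y.
Proof.
move=> u0 hz x y /andP [ux xv] /andP [uy yv].
have x0 : 0 <= x by lra.
have /andP [h1 h2] := truncn_itv x0.
set n := Num.truncn x in h1 h2 *.
apply/esym/truncn_def; apply/andP; split.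
  rewrite leNgt; apply/negP => yn.
  apply: (hz n%:Z); rewrite natzR; apply/andP; split; lra.
rewrite ltNge; apply/negP => yn.
apply: (hz n.+1%:Z); rewrite natzR; apply/andP; split; lra.
Qed.

Lemma kc (R : realType) (u v : R) :
  (forall z : int, ~ (u < z%:~R < v)) ->
  forall x y, u < x < v -> u < y < v -> Num.truncn `|x| = Num.truncn `|y|.
Proof.
move=> hz x y hx hy.
have : ~ (u < 0 < v) by have := hz 0; rewrite mulr0z.
move=> h0.
have [u0|u0] := leP 0 u.
  move: (hx) (hy) => /andP [? ?] /andP [? ?].
  rewrite !ger0_norm; [exact: (kc_pos u0 hz) | lra | lra].
have v0 : v <= 0 by rewrite leNgt; apply/negP => v0; apply: h0; rewrite u0 v0.
rewrite !ler0_norm; last 2 first.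
  by move: hy => /andP [? ?]; lra.
  by move: hx => /andP [? ?]; lra.
apply: (@kc_pos R (- v) (- u)); first lra.
  move=> z /andP [z1 z2]; apply: (hz (- z)); rewrite mulrNz; apply/andP; split; lra.
  by move: hx => /andP [? ?]; apply/andP; split; lra.
by move: hy => /andP [? ?]; apply/andP; split; lra.
Qed.

Lemma pc_trunc (R : realType) (g : nat -> R) :
  piecewise_constant (fun x : R => g (Num.truncn `|x|)).
Proof.
move=> a b ab.
set F := Num.floor a; set C := Num.ceil b.
have hF := floor_itv a; have hC := ceil_itv b.
rewrite -/F intrD1 in hF; rewrite -/C intrB in hC.
have FC : F < C.
  by rewrite -(ltr_int R); move: hF hC => /andP [? ?] /andP [? ?]; lra.
set n := `|C - F|%N.
have hn : (n%:R : R) = C%:~R - F%:~R.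
  by rewrite -natzR /n gez0_abs ?intrB // subr_ge0 ltW.
have n1 : (1 <= n)%N by rewrite /n; lia.
pose t k := if k == 0%N then a else Num.min b ((F + k%:Z)%:~R).
have tk k : (0 < k < n)%N -> t k = F%:~R + k%:R.
  move=> /andP [k0 kn]; rewrite /t ifF; last by apply/negbTE; rewrite -lt0n.
  rewrite intrD natzR; apply/min_idPr.
  have : (k.+1%:R : R) <= n%:R by rewrite ler_nat.
  rewrite -natr1; move: hC => /andP [? ?]; lra.
have tlow k : (k < n)%N ->
    [/\ F%:~R + k%:R <= t k, t k < F%:~R + k%:R + 1 & t k < b].
  case: k => [|k] kn.
    rewrite /t /= addr0; move: hF => /andP [? ?]; split; lra.
  rewrite tk ?kn //; split; [lra | lra |].
  have : (k.+2%:R : R) <= n%:R by rewrite ler_nat.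
  rewrite -!natr1; move: hC => /andP [? ?]; lra.
have tS k : t k.+1 = Num.min b (F%:~R + k%:R + 1).
  by rewrite /t /= intrD natzR -natr1 addrA.
exists n, t; split.
- by [].
- rewrite /t ifF; last by apply/negbTE; rewrite -lt0n.
  rewrite intrD natzR hn; apply/min_idPl.
  move: hC => /andP [? ?]; lra.
- move=> k kn; rewrite tS lt_min.
  have [l1 l2 l3] := tlow k kn; apply/andP; split; lra.
- move=> k kn x y hx hy; congr g; apply: (kc (u:=t k) (v:=t k.+1)) => // z /andP [z1 z2].
  have [l1 l2 l3] := tlow k kn.
  have : Num.min b (F%:~R + k%:R + 1) <= F%:~R + k%:R + 1 by rewrite ge_min lexx orbT.
  rewrite -tS => m1.
  have e1 : (F%:~R + k%:R : R) = (F + k%:Z)%:~R by rewrite intrD natzR.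
  have i1 : ((F + k%:Z)%:~R : R) < z%:~R by rewrite -e1; lra.
  have i2 : (z%:~R : R) < (F + k%:Z + 1)%:~R by rewrite intrD1 -e1; lra.
  rewrite ltr_int in i1; rewrite ltr_int ltzD1 in i2.
  by move: (lt_le_trans i1 i2); rewrite ltxx.
Qed.


Lemma theta_decay (R : realType) (theta : R -> R) :
  theta x @[x --> +oo] --> 0 -> theta x @[x --> -oo] --> 0 ->
  forall e : R, 0 < e -> exists T : R, 0 < T /\
    forall x, T <= `|x| -> Num.max `|theta x| (theta x ^+ 2) <= e.
Proof.
move=> htp htm e e0.
set e' := Num.min e 1.
have e'0 : 0 < e' by rewrite lt_min e0 ltr01.
have e'1 : e' <= 1 by rewrite ge_min lexx orbT.
have e'e : e' <= e by rewrite ge_min lexx.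
have [M1 [M1r HM1]] := (cvgr0Pnorm_lt _).1 htp e' e'0.
have [M2 [M2r HM2]] := (cvgr0Pnorm_lt _).1 htm e' e'0.
exists (`|M1| + `|M2| + 1); split.
  by apply: ltr_pwDr => //; apply: addr_ge0.
move=> x hx.
have ht : `|theta x| < e'.
  have h1 := ler_norm M1; have h2 := normr_ge0 M2.
  have h3 : - M2 <= `|M2| by rewrite -normrN; exact: ler_norm.
  have h4 := normr_ge0 M1.
  have [x0|x0] := leP 0 x.
    by apply: HM1 => /=; move: hx; rewrite (ger0_norm x0); lra.
  by apply: HM2 => /=; move: hx; rewrite (ltr0_norm x0); lra.
rewrite ge_max; apply/andP; split; first lra.
rewrite -[theta x ^+ 2]ger0_norm ?sqr_ge0 // normrX.
have := normr_ge0 (theta x); nra.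
Qed.

Lemma theta_bound (R : realType) (theta : R -> R) : continuous theta ->
  theta x @[x --> +oo] --> 0 -> theta x @[x --> -oo] --> 0 ->
  exists B : R, forall x, Num.max `|theta x| (theta x ^+ 2) <= B.
Proof.
move=> htc htp htm.
have [T [T0 HT]] := theta_decay htp htm ltr01.
have cf : {within `[- T, T], continuous (fun x => `|theta x|)}.
  apply: continuous_subspaceT => x.
  exact: (continuous_comp (htc x) (@norm_continuous _ R^o _)).
have hT : - T <= T by lra.
have [c _ Hc] := EVT_max hT cf.
set B1 := `|theta c| + 1.
have hB : forall x, `|theta x| <= B1.
  move=> x; have [xT|xT] := leP `|x| T.
    have : `|theta x| <= `|theta c|.
      by apply: Hc; rewrite in_itv /= -ler_norml.
    rewrite /B1; lra.
  have := HT x (ltW xT); rewrite ge_max => /andP [h1 _].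
  have := normr_ge0 (theta c); rewrite /B1; lra.
exists (Num.max B1 (B1 ^+ 2)) => x.
have h := hB x; have h0 := normr_ge0 (theta x).
rewrite ge_max; apply/andP; split; rewrite le_max.
  by rewrite h.
apply/orP; right.
rewrite -[theta x ^+ 2]ger0_norm ?sqr_ge0 // normrX; nra.
Qed.

Lemma envelope (R : realType) (m : R -> R) :
  (forall x, 0 <= m x) -> (exists B, forall x, m x <= B) ->
  (forall e : R, 0 < e -> exists T : R, 0 < T /\ forall x, T <= `|x| -> m x <= e) ->
  exists a : nat -> R, [/\ forall n, 0 < a n, forall n, a n.+1 <= a n,
    (forall e : R, 0 < e -> exists N, forall n, (N <= n)%N -> a n <= e) &
    forall x, m x <= a (Num.truncn `|x|)].
Proof.
move=> m0 [B hB] hdec.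
pose S (n : nat) := [set m x | x in [set x : R | n%:R <= `|x|]].
have Sne n : S n !=set0 by exists (m n%:R), n%:R => //=; rewrite ger0_norm.
have Sub n : has_ubound (S n) by exists B => _ [x _ <-].
have Sin n x : n%:R <= `|x| -> m x <= sup (S n).
  by move=> hx; apply: ub_le_sup => //; exists x.
pose a n := sup (S n) + (n.+1%:R)^-1.
have M0 n : 0 <= sup (S n).
  by apply: le_trans (m0 n%:R) _; apply: Sin; rewrite ger0_norm.
exists a; split.
- by move=> n; apply: ltr_wpDl => //; rewrite invr_gt0 ltr0n.
- move=> n; apply: lerD.
    apply: ge_sup => // _ [x hx <-]; apply: Sin; move: hx => /=.
    by apply: le_trans; rewrite ler_nat.
  by rewrite lef_pV2 ?posrE ?ltr0n // ler_nat.
- move=> e e0.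
  have e20 : 0 < e / 2 by rewrite divr_gt0.
  have [T [T0 HT]] := hdec _ e20.
  exists (maxn (Num.truncn T).+1 (Num.truncn (2 / e))).+1 => n.
  rewrite ltn_neqAle => /andP [_]; rewrite geq_max => /andP [h1 h2].
  have hn1 : T <= n%:R.
    by apply: ltW; apply: lt_le_trans (truncnS_gt _) _; rewrite ler_nat.
  have hn2 : 2 / e < n.+1%:R.
    by apply: lt_le_trans (truncnS_gt _) _; rewrite ler_nat ltnS.
  have hs : sup (S n) <= e / 2.
    apply: ge_sup => // _ [x hx <-]; apply: HT; exact: le_trans hn1 hx.
  have hi : (n.+1%:R)^-1 <= e / 2.
    rewrite -[e / 2]invf_div lef_pV2 ?posrE ?ltr0n ?divr_gt0 //; exact: ltW.
  by apply: le_trans (lerD hs hi) _; rewrite -splitr.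
- move=> x; rewrite /a; apply: le_trans (_ : sup (S (Num.truncn `|x|)) <= _).
    by apply: Sin; rewrite truncn_le.
  by rewrite lerDl invr_ge0.
Qed.


Unset Implicit Arguments.
Set Strict Implicit.

Theorem mainTheorem5 (R : realType) (A : R) (theta : R -> R)
  (hA0 : 0 < A) (hA1 : A < 1)
  (htc : continuous theta)
  (htp : theta x @[x --> +oo] --> 0)
  (htm : theta x @[x --> -oo] --> 0) :
  exists G : R -> R,
    piecewise_constant G /\ (forall x, 0 < G x) /\
    [/\ (forall x, Num.max `|theta x| (theta x ^+ 2) <= G x),
        (forall x, G (- x) = G x),
        (forall x y, 0 <= x -> x <= y -> G y <= G x),
        G x @[x --> +oo] --> 0 &
        exists2 sigma : R, 0 < sigma &
          forall (i : nat) (x : R),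
            (convolution (rho_kernel A i) G x <= (sigma / (1 + i%:R) * G x)%:E)%E].
Proof.
pose m := fun x => Num.max `|theta x| (theta x ^+ 2).
have m0 : forall x, 0 <= m x by move=> x; rewrite le_max normr_ge0.
have [a [a0 ad alim am]] := @envelope R m m0 (theta_bound htc htp htm)
   (fun e e0 => theta_decay htp htm e0).
pose k0 := Num.min (Num.sqrt (1 - A)) (Num.sqrt (2 * A)).
have k00 : 0 < k0 by rewrite lt_min !sqrtr_gt0; apply/andP; split; lra.
pose k := k0 / 2.
have kp : 0 < k by rewrite divr_gt0.
pose G := fun x : R => gs a k (Num.truncn `|x|).
have Gp : forall x, 0 < G x by move=> x; exact: gs_gt0.
have HG : forall x y, G y <= expR k * expR (k * `|x - y|) * G x.
  move=> x y; rewrite /G.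
  set n := Num.truncn `|x|; set mm := Num.truncn `|y|.
  have hx := truncn_itv (normr_ge0 x); have hy := truncn_itv (normr_ge0 y).
  rewrite -/n in hx; rewrite -/mm in hy.
  have d0 := normr_ge0 (x - y).
  have e1 : 1 <= expR k * expR (k * `|x - y|).
    rewrite -expRD -expR0 ler_expR; apply: addr_ge0; first exact: ltW.
    by apply: mulr_ge0 => //; exact: ltW.
  have [h|h] := leqP n mm.
    apply: le_trans (gs_mono kp a0 ad h) _.
    exact: ler_peMl (ltW (gs_gt0 k a0 n)) e1.
  have g := gs_growth a k mm (n - mm).
  rewrite subnKC ?(ltnW h) // in g.
  have hj : ((n - mm)%N%:R : R) <= 1 + `|x - y|.
    rewrite natrB ?(ltnW h) //; have := lerB_dist x y.
    move: hx hy => /andP [hx1 hx2] /andP [hy1 hy2]; rewrite -natr1 in hy2; lra.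
  have ej : expR (k * (n - mm)%N%:R) <= expR k * expR (k * `|x - y|).
    rewrite -expRD ler_expR; have := ler_wpM2l (ltW kp) hj; nra.
  have g2 : gs a k mm <= expR (k * (n - mm)%N%:R) * gs a k n.
    have := ler_wpM2l (expR_ge0 (k * (n - mm)%N%:R)) g.
    by rewrite mulrA -expRD subrr expR0 mul1r.
  apply: le_trans g2 _.
  by apply: ler_wpM2r ej; apply: ltW; apply: gs_gt0.
exists G; split; first exact: pc_trunc.
split; first exact: Gp.
split.
- by move=> x; apply: le_trans (am x) _; exact: gs_ge_a.
- by move=> x; rewrite /G normrN.
- move=> x y x0 xy; rewrite /G (ger0_norm x0) ger0_norm ?(le_trans x0) //.
  by apply: (gs_mono kp a0 ad); exact: le_truncn.
- apply/cvgr0Pnorm_lt => e e0.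
  have e20 : 0 < e / 2 by rewrite divr_gt0.
  have [N HN] := gs_lim kp a0 alim e20.
  near=> x.
  have hx : N%:R <= x by near: x; apply: nbhs_pinfty_ge; exact: num_real.
  have x0 : 0 <= x by apply: le_trans hx.
  rewrite ger0_norm ?(ltW (Gp x)) //.
  apply: le_lt_trans (HN _ _) _.
    by rewrite /G ger0_norm // truncn_ge_nat.
  by rewrite ltr_pdivrMr // ltr_pMr // ltr1n.
- have Ep := expR_gt0 k.
  have up : 0 < (1 - A)^-1 by rewrite invr_gt0; lra.
  have vp : 0 < A^-1 by rewrite invr_gt0.
  exists (2 * expR k * ((1 - A)^-1 + A^-1)).
    by apply: mulr_gt0; [apply: mulr_gt0 | apply: addr_gt0].
  move=> i x; rewrite /convolution /rho_kernel.
  have hc : rho_c A i = if i is 0%N then 1 - A else 2 * i%:R * A.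
    by rewrite /rho_c /lam; case: (i) => [|j] /=; ring.
  have c0 : 0 < rho_c A i.
    rewrite hc; case: (i) => [|i']; first lra.
    by apply: mulr_gt0 => //; apply: mulr_gt0 => //; rewrite ltr0n.
  have ks : 2 * k <= Num.sqrt (rho_c A i).
    have -> : 2 * k = k0 by rewrite /k; field.
    rewrite hc; case: (i) => [|i']; first by rewrite ge_min lexx.
    apply: le_trans (_ : Num.sqrt (2 * A) <= _); first by rewrite ge_min lexx orbT.
    rewrite ler_sqrt; last by apply: mulr_ge0; [apply: mulr_ge0 | exact: ltW].
    rewrite ler_pM2r // ler_pMr // ler1n //.
  apply: le_trans (conv_bound kp ks (expR_ge0 k) (fun y => ltW (Gp y)) (HG x)) _.
  rewrite lee_fin sqr_sqrtr ?(ltW c0) //.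
  rewrite mulrAC; apply: ler_wpM2r; first exact: ltW (Gp x).
  rewrite hc; case: (i) => [|i'].
    rewrite addr0 divr1; nra.
  set N := i'.+1%:R.
  have N1 : 1 <= N by rewrite ler1n.
  have -> : 2 / (2 * N * A) = A^-1 * N^-1 by field; apply/andP; split; lra.
  have w1 : N^-1 <= 1 by rewrite invf_le1; lra.
  have wN : N^-1 * N = 1 by rewrite mulVf //; lra.
  have w0 : 0 < N^-1 by rewrite invr_gt0; lra.
  rewrite ler_pdivlMr; last lra.
  have := mulr_gt0 Ep vp; have := mulr_gt0 Ep up.
  move=> h1 h2.
  have -> : expR k * (A^-1 / N) * (1 + N) = expR k * A^-1 * (N^-1 + 1).
    by field; do ?[apply/andP; split]; lra.
  have h3 : expR k * A^-1 * N^-1 <= expR k * A^-1.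
    by rewrite ger_pMr // mulr_gt0.
  rewrite mulrDr mulr1.
  have h4 : expR k * A^-1 = expR k / A by [].
  have h5 : expR k * (1 - A)^-1 = expR k / (1 - A) by [].
  have -> : 2 * expR k * ((1 - A)^-1 + A^-1) = 2 * (expR k / (1 - A)) + 2 * (expR k / A) by ring.
  move: h1 h2 h3; move: (expR k / A / N) (expR k / A) (expR k / (1 - A)) => X Y Z.
  move: (Y / N) => W; lra.
Unshelve. all: end_near.
Qed.
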